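(* Every generic Euclidean triangle is typical.
   Context: A Euclidean triangle with edge lengths $\ell_1,\ell_2,\ell_3$ and interior angles $\alpha_1,\alpha_2,\alpha_3$ is generic if for some real $k>0$ the numbers $k\ell_1,k\ell_2,k\ell_3$ are algebraically independent over $\mathbb{Q}$; it is typical if $\alpha_1,\alpha_2,\alpha_3$ are linearly independent over $\mathbb{Q}$. *)

(* Defs.v *)
From HB Require Import structures.
From mathcomp Require Import all_boot all_order all_algebra.
From mathcomp Require Import reals.
From mathcomp Require Import mpoly.
From mathcomp Require Import trigo.
Set Implicit Arguments. Unset Strict Implicit. Unset Printing Implicit Defensive.
Import Order.TTheory GRing.Theory Num.Theory.
Local Open Scope ring_scope.

Definition alg_indep_Q (R : realType) (n : nat) (v : 'I_n -> R) : Prop :=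
  forall p : {mpoly rat[n]}, mmap (ratr : rat -> R) v p = 0 -> p = 0.

Definition lin_indep_Q (R : realType) (n : nat) (v : 'I_n -> R) : Prop :=
  forall q : 'I_n -> rat, \sum_(i < n) ratr (q i) * v i = 0 -> forall i, q i = 0.

Definition is_triangle (R : realType) (l : 'I_3 -> R) : Prop :=
  (forall i, 0 < l i) /\
  l 0 < l 1 + l 2 /\ l 1 < l 0 + l 2 /\ l 2 < l 0 + l 1.

Definition tri_angle (R : realType) (l : 'I_3 -> R) (i : 'I_3) : R :=
  let a := l i in
  let b := l (i + 1)%R in
  let c := l (i + 2%:R)%R in
  acos ((b ^+ 2 + c ^+ 2 - a ^+ 2) / (2 * b * c)).

Definition generic_triangle (R : realType) (l : 'I_3 -> R) : Prop :=
  exists k : R, 0 < k /\ alg_indep_Q (fun i => k * l i).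

Definition typical_triangle (R : realType) (l : 'I_3 -> R) : Prop :=
  lin_indep_Q (tri_angle l).

(* Main.v *)
Require Import Defs.
From HB Require Import structures.
From mathcomp Require Import all_boot all_order all_algebra.
From mathcomp Require Import reals mpoly trigo ring lra zify.
Set Implicit Arguments. Unset Strict Implicit. Unset Printing Implicit Defensive.
Import Order.TTheory GRing.Theory Num.Theory.
Local Open Scope ring_scope.

Section Pairs.
Variable S : comRingType.
Definition pm (Q : S) (u v : S * S) : S * S :=
  (u.1 * v.1 - Q * (u.2 * v.2), u.1 * v.2 + u.2 * v.1).
Fixpoint pe (Q : S) (u : S * S) (n : nat) : S * S :=
  match n with 0 => (1, 0) | n'.+1 => pm Q u (pe Q u n') end.
Definition sc (s : S) (u : S * S) : S * S := (s * u.1, s * u.2).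
Definition W (Q : S) (g : 'I_3 -> S * S) (u : 'I_3 -> nat) : S * S :=
  pm Q (pm Q (pe Q (g 0) (u 0)) (pe Q (g 1) (u 1))) (pe Q (g 2%:R) (u 2%:R)).
Definition sprod (t : 'I_3 -> S) (u : 'I_3 -> nat) : S :=
  t 0 ^+ u 0 * t 1 ^+ u 1 * t 2%:R ^+ u 2%:R.

Lemma pm_sc Q s t a b : pm Q (sc s a) (sc t b) = sc (s * t) (pm Q a b).
Proof. case: a b => [a1 a2] [b1 b2]; rewrite /pm /sc /=; congr pair; ring. Qed.

Lemma pe_sc Q s a n : pe Q (sc s a) n = sc (s ^+ n) (pe Q a n).
Proof.
elim: n => [|n IH] /=; first by rewrite /sc expr0 !mul1r.
by rewrite IH pm_sc exprS.
Qed.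

Lemma W_sc Q t g u : W Q (fun j => sc (t j) (g j)) u = sc (sprod t u) (W Q g u).
Proof. by rewrite /W !pe_sc !pm_sc. Qed.

Lemma sc_sc s t a : sc s (sc t a) = sc (s * t) a.
Proof. by rewrite /sc /= !mulrA. Qed.

Lemma sc1 a : sc 1 a = a.
Proof. by case: a => a b; rewrite /sc !mul1r. Qed.

Lemma pe_dual t n : pe 0 (1, t) n = (1, t *+ n).
Proof.
elim: n => [|n IH] /=; first by rewrite mulr0n.
rewrite IH /pm /=; congr pair; first by rewrite mul0r subr0 mulr1.
by rewrite mul1r mulr1 mulrS addrC.
Qed.

Lemma W_dual t u : W 0 (fun j => (1, t j)) u =
  (1, t 0 *+ u 0 + t 1 *+ u 1 + t 2%:R *+ u 2%:R).
Proof. rewrite /W !pe_dual /pm /=; congr pair; first by rewrite !mul0r !subr0 !mulr1.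
by rewrite mul0r subr0 mul1r; ring. Qed.

End Pairs.

Section PMap.
Variables (S T : comRingType) (f : S -> T).
Hypotheses (f1 : f 1 = 1) (f0 : f 0 = 0) (fM : forall a b, f (a * b) = f a * f b)
  (fB : forall a b, f (a - b) = f a - f b) (fD : forall a b, f (a + b) = f a + f b).
Definition ppmap (u : S * S) := (f u.1, f u.2).
Lemma ppmap_pm Q a b : ppmap (pm Q a b) = pm (f Q) (ppmap a) (ppmap b).
Proof. by rewrite /ppmap /pm /= fB fD !fM. Qed.
Lemma ppmap_pe Q a n : ppmap (pe Q a n) = pe (f Q) (ppmap a) n.
Proof. elim: n => [|n IH] /=; first by rewrite /ppmap /= f1 f0. by rewrite ppmap_pm IH. Qed.
Lemma ppmap_sc s a : ppmap (sc s a) = sc (f s) (ppmap a).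
Proof. by rewrite /ppmap /sc /= !fM. Qed.
Lemma ppmap_W Q g u : ppmap (W Q g u) = W (f Q) (fun j => ppmap (g j)) u.
Proof. by rewrite /W !ppmap_pm !ppmap_pe. Qed.
End PMap.

Lemma eq_sprod (S : comRingType) (t t' : 'I_3 -> S) u : t =1 t' -> sprod t u = sprod t' u.
Proof. by move=> e; rewrite /sprod !e. Qed.
Lemma eq_W (S : comRingType) Q (g g' : 'I_3 -> S * S) u : g =1 g' -> W Q g u = W Q g' u.
Proof. by move=> e; rewrite /W !e. Qed.

Section Phi.
Variable S : comRingType.
Variables (D Q : S).
Hypothesis hDQ : D ^+ 2 = Q.
Definition phi (a : S * S) : S * S := (a.1, D * a.2).
Lemma phi_pm a b : phi (pm Q a b) = pm 1 (phi a) (phi b).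
Proof. rewrite /phi /pm /= -hDQ; congr pair; ring. Qed.
Lemma phi_pe a n : phi (pe Q a n) = pe 1 (phi a) n.
Proof. elim: n => [|n IH] /=; first by rewrite /phi /= mulr0. by rewrite phi_pm IH. Qed.
Lemma phi_W g u : phi (W Q g u) = W 1 (fun j => phi (g j)) u.
Proof. by rewrite /W !phi_pm !phi_pe. Qed.
Lemma phi_sc s a : phi (sc s a) = sc s (phi a).
Proof. by rewrite /phi /sc /= mulrCA. Qed.
End Phi.

Lemma sprodM (S : comRingType) (t t' : 'I_3 -> S) u :
  sprod t u * sprod t' u = sprod (fun j => t j * t' j) u.
Proof. rewrite /sprod !exprMn; ring. Qed.
Lemma sprod1 (S : comRingType) u : sprod (fun _ => 1 : S) u = 1.
Proof. by rewrite /sprod !expr1n !mulr1. Qed.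

Definition Pm (j : 'I_3) : {mpoly rat[3]} :=
  'X_(j + 1) ^+ 2 + 'X_(j + 2%:R) ^+ 2 - 'X_j ^+ 2.
Definition Qj (j : 'I_3) : {mpoly rat[3]} := 'X_(j + 1) * 'X_(j + 2%:R).
Definition Qm : {mpoly rat[3]} := 4%:R * Qj 0 ^+ 2 - Pm 0 ^+ 2.
Definition Fm (u v : 'I_3 -> nat) : {mpoly rat[3]} * {mpoly rat[3]} :=
  sc (sprod (fun j => 2%:R * Qj j) v) (W Qm (fun j => (Pm j, 1)) u).

Section Eval.
Variable R : realType.
Definition pr (x : 'I_3 -> R) (j : 'I_3) := x (j + 1) ^+ 2 + x (j + 2%:R) ^+ 2 - x j ^+ 2.
Definition qr (x : 'I_3 -> R) (j : 'I_3) := x (j + 1) * x (j + 2%:R).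
Definition Qr (x : 'I_3 -> R) := 4%:R * qr x 0 ^+ 2 - pr x 0 ^+ 2.

Lemma evX (x : 'I_3 -> R) i : mmap (ratr : rat -> R) x 'X_i = x i.
Proof. by rewrite mmapX mmap1U. Qed.

Lemma evQj (x : 'I_3 -> R) j : mmap (ratr : rat -> R) x (Qj j) = qr x j.
Proof. by rewrite /Qj rmorphM /= !evX. Qed.
Lemma evPm (x : 'I_3 -> R) j : mmap (ratr : rat -> R) x (Pm j) = pr x j.
Proof. by rewrite /Pm rmorphB rmorphD !rmorphXn /= !evX. Qed.
Lemma evQm (x : 'I_3 -> R) : mmap (ratr : rat -> R) x Qm = Qr x.
Proof. by rewrite /Qm rmorphB rmorphM !rmorphXn rmorph_nat /= evQj evPm. Qed.

Lemma rm_sprod (S T : comRingType) (f : {rmorphism S -> T}) t u :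
  f (sprod t u) = sprod (fun j => f (t j)) u.
Proof. by rewrite /sprod !rmorphM !rmorphXn. Qed.

Lemma ev_Fm (x : 'I_3 -> R) u v :
  ppmap (mmap (ratr : rat -> R) x) (Fm u v) =
  sc (sprod (fun j => 2%:R * qr x j) v) (W (Qr x) (fun j => (pr x j, 1)) u).
Proof.
rewrite /Fm ppmap_sc ?ppmap_W; try (by move=> *; rewrite ?rmorphM ?rmorphB ?rmorphD ?rmorph1 ?rmorph0).
congr sc.
  rewrite rm_sprod; apply: eq_sprod => j.
  by rewrite rmorphM rmorph_nat /= evQj.
rewrite /= evQm; apply: eq_W => j; rewrite /ppmap /= rmorph1; congr pair.
by rewrite evPm.
Qed.
End Eval.

Section Deg.
Variable R : realType.

Definition Tsum (p : 'I_3 -> R) (u : 'I_3 -> nat) :=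
  (p 0)^-1 *+ u 0 + (p 1)^-1 *+ u 1 + (p 2%:R)^-1 *+ u 2%:R.

Lemma sprod_neq0 (t : 'I_3 -> R) u : (forall j, t j != 0) -> sprod t u != 0.
Proof. by move=> h; rewrite /sprod !mulf_neq0 // expf_neq0. Qed.

Lemma W_deg (p : 'I_3 -> R) u : (forall j, p j != 0) ->
  W 0 (fun j => (p j, 1)) u = sc (sprod p u) (1, Tsum p u).
Proof.
move=> hp.
rewrite -(eq_W _ (g := fun j => sc (p j) (1, (p j)^-1))); last first.
  by move=> j; rewrite /sc /= mulr1 divff.
by rewrite W_sc W_dual.
Qed.

Lemma deg_pt (y : 'I_3 -> R) u v : Qr y = 0 -> (forall j, pr y j != 0) ->
  (forall j, qr y j != 0) -> Fm u v = Fm v u -> Tsum (pr y) u = Tsum (pr y) v.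
Proof.
move=> hQ hp hq e.
have := ev_Fm y u v; rewrite e ev_Fm hQ !W_deg // !sc_sc /sc /= !mulr1 => -[e1 e2].
have nz : sprod (fun j => 2%:R * qr y j) u * sprod (pr y) v != 0.
  by rewrite mulf_neq0 // sprod_neq0 // => j; rewrite mulf_neq0 // pnatr_eq0.
by move: e2; rewrite -e1 => h; apply/esym; exact: (mulfI nz h).
Qed.
End Deg.

Section Pts.
Variable R : realType.
Definition y1 (i : 'I_3) : R := match val i with 0%N => 1 | 1%N => 1 | _ => 2%:R end.
Definition y2 (i : 'I_3) : R := match val i with 0%N => 2%:R | 1%N => 1 | _ => 3%:R end.

Ltac ordcase j := case: j => [[|[|[|?]]] ?] //.

Lemma natr_eq_nat (a b : nat) : (a%:R = b%:R :> R) -> a = b.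
Proof. by move/eqP; rewrite eqr_nat => /eqP. Qed.

Lemma tsum_lin (a b c : R) (u0 u1 u2 v0 v1 v2 : nat) :
  a *+ u0 + b *+ u1 + c *+ u2 = a *+ v0 + b *+ v1 + c *+ v2 ->
  a * u0%:R + b * u1%:R + c * u2%:R = a * v0%:R + b * v1%:R + c * v2%:R.
Proof. by rewrite !mulr_natr. Qed.

Lemma rel1 u v : Fm u v = Fm v u -> (u 0%R + u 1%R + 2 * v 2%:R = v 0%R + v 1%R + 2 * u 2%:R)%N.
Proof.
move=> e; have := @deg_pt R y1 u v.
have hQ : Qr y1 = 0 by rewrite /Qr /qr /pr /y1 /=; ring.
have hp : forall j, pr y1 j != 0.
  move=> j; ordcase j; rewrite /pr /y1 /=; apply/eqP; lra.
have hq : forall j, qr y1 j != 0.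
  move=> j; ordcase j; rewrite /qr /y1 /=; apply/eqP; lra.
move=> /(_ hQ hp hq e); rewrite /Tsum /pr /y1 /= => /tsum_lin h.
have e1 : (1 ^+ 2 + 2%:R ^+ 2 - 1 ^+ 2 : R) = 4%:R by ring.
have e2 : (2%:R ^+ 2 + 1 ^+ 2 - 1 ^+ 2 : R) = 4%:R by ring.
have e3 : (1 ^+ 2 + 1 ^+ 2 - 2%:R ^+ 2 : R) = - 2%:R by ring.
rewrite e1 e2 e3 in h.
apply: natr_eq_nat; rewrite !natrD; lra.
Qed.

Lemma rel2 u v : Fm u v = Fm v u -> (2 * u 0%R + u 1%R + 3 * v 2%:R = 2 * v 0%R + v 1%R + 3 * u 2%:R)%N.
Proof.
move=> e; have := @deg_pt R y2 u v.
have hQ : Qr y2 = 0 by rewrite /Qr /qr /pr /y2 /=; ring.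
have hp : forall j, pr y2 j != 0.
  move=> j; ordcase j; rewrite /pr /y2 /=; apply/eqP; lra.
have hq : forall j, qr y2 j != 0.
  move=> j; ordcase j; rewrite /qr /y2 /=; apply/eqP; lra.
move=> /(_ hQ hp hq e); rewrite /Tsum /pr /y2 /= => /tsum_lin h.
have e1 : (1 ^+ 2 + 3%:R ^+ 2 - 2%:R ^+ 2 : R) = 6%:R by ring.
have e2 : (3%:R ^+ 2 + 2%:R ^+ 2 - 1 ^+ 2 : R) = 12%:R by ring.
have e3 : (2%:R ^+ 2 + 1 ^+ 2 - 3%:R ^+ 2 : R) = - 4%:R by ring.
rewrite e1 e2 e3 in h.
apply: natr_eq_nat; rewrite !natrD; lra.
Qed.
End Pts.

Lemma ord3_cases (j : 'I_3) : j = 0 \/ j = 1 \/ j = 2%:R.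
Proof.
case: j => [[|[|[|?]]] ?] //.
- by left; apply: val_inj.
- by right; left; apply: val_inj.
- by right; right; apply: val_inj.
Qed.

Lemma i01 : (0 + 1 : 'I_3) = 1. Proof. exact: val_inj. Qed.
Lemma i02 : (0 + 2%:R : 'I_3) = 2%:R. Proof. exact: val_inj. Qed.
Lemma i11 : (1 + 1 : 'I_3) = 2%:R. Proof. exact: val_inj. Qed.
Lemma i12 : (1 + 2%:R : 'I_3) = 0. Proof. exact: val_inj. Qed.
Lemma i21 : (2%:R + 1 : 'I_3) = 0. Proof. exact: val_inj. Qed.
Lemma i22 : (2%:R + 2%:R : 'I_3) = 1. Proof. exact: val_inj. Qed.

Section Real.
Variable R : realType.
Definition rotp (t : R) : R * R := (cos t, sin t).
Lemma rot_add a b : rotp (a + b) = pm 1 (rotp a) (rotp b).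
Proof. rewrite /rotp /pm /= cosD sinD mul1r; congr pair; ring. Qed.
Lemma rot_mul a n : rotp (n%:R * a) = pe 1 (rotp a) n.
Proof.
elim: n => [|n IH] /=; first by rewrite mul0r /rotp cos0 sin0.
by rewrite -IH -rot_add mulrS mulrDl mul1r.
Qed.
Lemma rot_sum (al : 'I_3 -> R) u :
  rotp ((u 0)%:R * al 0 + (u 1)%:R * al 1 + (u 2%:R)%:R * al 2%:R) =
  W 1 (fun j => rotp (al j)) u.
Proof. by rewrite /W !rot_add !rot_mul. Qed.

Lemma Qr_sym (x : 'I_3 -> R) j : 4%:R * qr x j ^+ 2 - pr x j ^+ 2 = Qr x.
Proof.
rewrite /Qr; case: (ord3_cases j) => [->|[->|->]];
  rewrite /qr /pr ?i01 ?i02 ?i11 ?i12 ?i21 ?i22; ring.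
Qed.

Lemma Qr_fact (x : 'I_3 -> R) : Qr x =
  (x 0 + x 1 + x 2%:R) * (- x 0 + x 1 + x 2%:R) * (x 0 - x 1 + x 2%:R) * (x 0 + x 1 - x 2%:R).
Proof. rewrite /Qr /qr /pr ?i01 ?i02; ring. Qed.

Lemma Qr_gt0 (x : 'I_3 -> R) : is_triangle x -> 0 < Qr x.
Proof.
move=> [hp [h1 [h2 h3]]]; rewrite Qr_fact.
have := hp 0; have := hp 1; have := hp 2%:R => p2 p1 p0.
by rewrite !mulr_gt0 //; lra.
Qed.

Lemma rot_angle (x : 'I_3 -> R) j : is_triangle x ->
  rotp (tri_angle x j) = sc ((2%:R * qr x j)^-1) (pr x j, Num.sqrt (Qr x)).
Proof.
move=> ht; have Qpos := Qr_gt0 ht.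
have [hp _] := ht.
have bc : 0 < 2%:R * qr x j by rewrite /qr !mulr_gt0.
set C := pr x j / (2%:R * qr x j).
have -> : tri_angle x j = acos C by rewrite /tri_angle /C /pr /qr mulrA.
have hC : 1 - C ^+ 2 = (Num.sqrt (Qr x) / (2%:R * qr x j)) ^+ 2.
  rewrite [RHS]expr_div_n sqr_sqrtr ?(ltW Qpos) // -(Qr_sym x j) /C.
  by field; rewrite /qr !mulf_neq0 // ?gt_eqF ?hp.
have Cr : -1 <= C <= 1.
  have : 0 <= 1 - C ^+ 2 by rewrite hC sqr_ge0.
  move=> h; apply/andP; split; nra.
rewrite /rotp acosK; last by rewrite in_itv /=.
rewrite sin_acos // hC sqrtr_sqr ger0_norm; last first.
  by rewrite divr_ge0 ?sqrtr_ge0 // ltW.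
by rewrite /sc /= /C !(mulrC (_^-1)).
Qed.
End Real.

Lemma angle_gt0 (R : realType) (x : 'I_3 -> R) j : is_triangle x -> 0 < tri_angle x j.
Proof.
move=> ht; have Qpos := Qr_gt0 ht.
have [hp _] := ht.
have bc : 0 < 2%:R * qr x j by rewrite /qr !mulr_gt0.
set C := pr x j / (2%:R * qr x j).
have -> : tri_angle x j = acos C by rewrite /tri_angle /C /pr /qr mulrA.
have hC : 1 - C ^+ 2 = Qr x / (2%:R * qr x j) ^+ 2.
  rewrite -(Qr_sym x j) /C.
  by field; rewrite /qr !mulf_neq0 // ?gt_eqF ?hp.
have : 0 < 1 - C ^+ 2 by rewrite hC divr_gt0 // exprn_gt0.
move=> h; apply: acos_gt0; apply/andP; split; nra.
Qed.

Section R6.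
Variable R : realType.

Lemma phi_inj (D : R) a b : D != 0 -> phi D a = phi D b -> a = b.
Proof.
case: a b => [a1 a2] [b1 b2] hD; rewrite /phi /= => -[-> /(mulfI hD) ->] //.
Qed.

Lemma real_rel (x : 'I_3 -> R) u v : is_triangle x ->
  (u 0)%:R * tri_angle x 0 + (u 1)%:R * tri_angle x 1 + (u 2%:R)%:R * tri_angle x 2%:R =
  (v 0)%:R * tri_angle x 0 + (v 1)%:R * tri_angle x 1 + (v 2%:R)%:R * tri_angle x 2%:R ->
  ppmap (mmap (ratr : rat -> R) x) (Fm u v) = ppmap (mmap (ratr : rat -> R) x) (Fm v u).
Proof.
move=> ht e.
have Qpos := Qr_gt0 ht.
set D := Num.sqrt (Qr x).
have hD : D ^+ 2 = Qr x by rewrite sqr_sqrtr // ltW.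
have Dne : D != 0 by rewrite gt_eqF // sqrtr_gt0.
have [hp _] := ht.
set s := fun j => 2%:R * qr x j.
have sne : forall j, s j != 0 by move=> j; rewrite /s /qr !mulf_neq0 // gt_eqF.
have hrot : forall w : 'I_3 -> nat,
  rotp ((w 0)%:R * tri_angle x 0 + (w 1)%:R * tri_angle x 1 + (w 2%:R)%:R * tri_angle x 2%:R)%R
  = sc (sprod (fun j => (s j)^-1) w) (phi D (W (Qr x) (fun j => (pr x j, 1)) w)).
  move=> w; rewrite rot_sum (eq_W _ (g' := fun j => sc (s j)^-1 (phi D (pr x j, 1)))); last first.
    by move=> j; rewrite rot_angle // /phi /= mulr1.
  by rewrite W_sc (phi_W hD).
have := congr1 (@rotp R) e; rewrite !hrot => h.
have h2 := congr1 (sc (sprod s u * sprod s v)) h.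
rewrite !sc_sc in h2.
rewrite !ev_Fm; apply: (phi_inj Dne); rewrite !phi_sc.
have sinv : forall w, (sprod s w * sprod (fun j => (s j)^-1) w = 1)%R.
  move=> w; rewrite sprodM -(sprod1 R w); apply: eq_sprod => j; exact: divff.
have c1 : (sprod s u * sprod s v * sprod (fun j => (s j)^-1) u = sprod s v)%R.
  by rewrite mulrAC sinv mul1r.
have c2 : (sprod s u * sprod s v * sprod (fun j => (s j)^-1) v = sprod s u)%R.
  by rewrite -mulrA sinv mulr1.
by move: h2; rewrite c1 c2.
Qed.
End R6.

Lemma alg_step (R : realType) (x : 'I_3 -> R) u v : alg_indep_Q x ->
  ppmap (mmap (ratr : rat -> R) x) (Fm u v) = ppmap (mmap (ratr : rat -> R) x) (Fm v u) ->
  Fm u v = Fm v u.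
Proof.
move=> hi; case: (Fm u v) => a1 a2; case: (Fm v u) => b1 b2.
rewrite /ppmap /= => -[h1 h2].
have e1 : a1 - b1 = 0 by apply: hi; rewrite rmorphB /= h1 subrr.
have e2 : a2 - b2 = 0 by apply: hi; rewrite rmorphB /= h2 subrr.
by move/eqP: e1; rewrite subr_eq0 => /eqP ->; move/eqP: e2; rewrite subr_eq0 => /eqP ->.
Qed.

Lemma sum3 (R : zmodType) (F : 'I_3 -> R) : \sum_(i < 3) F i = F 0 + F 1 + F 2%:R.
Proof.
rewrite !big_ord_recl big_ord0 addr0 addrA.
by congr (F _ + F _ + F _); apply: val_inj.
Qed.

Lemma int_nat (z : int) : exists a b : nat, z = a%:Z - b%:Z.
Proof. case: z => n; first by exists n, 0%N; rewrite subr0. by exists 0%N, n.+1; rewrite NegzE add0r. Qed.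

Lemma rat_decomp (q : 'I_3 -> rat) : exists d : rat, d != 0 /\
  exists u v : 'I_3 -> nat, forall j, q j = d * ((u j)%:R - (v j)%:R).
Proof.
set d0 := denq (q 0); set d1 := denq (q 1); set d2 := denq (q 2%:R).
have [a0 [b0 e0]] := int_nat (numq (q 0) * d1 * d2).
have [a1 [b1 e1]] := int_nat (numq (q 1) * d0 * d2).
have [a2 [b2 e2]] := int_nat (numq (q 2%:R) * d0 * d1).
have n0 : (d0%:~R : rat) != 0 by rewrite intr_eq0 denq_neq0.
have n1 : (d1%:~R : rat) != 0 by rewrite intr_eq0 denq_neq0.
have n2 : (d2%:~R : rat) != 0 by rewrite intr_eq0 denq_neq0.
exists (d0%:~R * d1%:~R * d2%:~R)^-1; split; first by rewrite invr_eq0 !mulf_neq0.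
exists (fun j => if j == 0 then a0 else if j == 1 then a1 else a2).
exists (fun j => if j == 0 then b0 else if j == 1 then b1 else b2).
have cv : forall (a b : nat) (z : int), z = a%:Z - b%:Z -> (a%:R - b%:R : rat) = z%:~R.
  by move=> a b z ->; rewrite rmorphB /=.
move=> j; case: (ord3_cases j) => [->|[->|->]].
- rewrite /= (cv _ _ _ e0) !rmorphM /= -{1}[q 0]divq_num_den -/d0; field.
  by rewrite n0 n1 n2.
- rewrite /= (cv _ _ _ e1) !rmorphM /= -{1}[q 1]divq_num_den -/d1; field.
  by rewrite n0 n1 n2.
- rewrite /= (cv _ _ _ e2) !rmorphM /= -{1}[q 2%:R]divq_num_den -/d2; field.
  by rewrite n0 n1 n2.
Qed.

Lemma tri_scale (R : realType) (l : 'I_3 -> R) (k : R) j : 0 < k -> (forall i, 0 < l i) ->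
  tri_angle (fun i => k * l i) j = tri_angle l j.
Proof.
move=> kp hp; rewrite /tri_angle; congr acos.
have := hp (j + 1); have := hp (j + 2%:R) => h2 h1.
by field; rewrite !gt_eqF.
Qed.

Lemma tri_scale_tri (R : realType) (l : 'I_3 -> R) (k : R) : 0 < k -> is_triangle l ->
  is_triangle (fun i => k * l i).
Proof.
move=> kp [hp [h1 [h2 h3]]]; split; first by move=> i; rewrite mulr_gt0.
by rewrite -!mulrDr !ltr_pM2l.
Qed.

Theorem proposition2p5 (R : realType) (l : 'I_3 -> R) :
  is_triangle l -> generic_triangle l -> typical_triangle l.
Proof.
move=> ht [k [kp hi]] q hq.
set x := fun i => k * l i.
have hx : is_triangle x by exact: tri_scale_tri.
have [hp _] := ht.
have ta : forall j, tri_angle x j = tri_angle l j by move=> j; exact: tri_scale.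
rewrite sum3 in hq.
have [d [dn [u [v huv]]]] := rat_decomp q.
have rdn : (ratr d : R) != 0 by rewrite fmorph_eq0.
have H0 : ((u 0)%:R - (v 0)%:R) * tri_angle l 0 + ((u 1)%:R - (v 1)%:R) * tri_angle l 1
    + ((u 2%:R)%:R - (v 2%:R)%:R) * tri_angle l 2%:R = 0 :> R.
  apply: (mulfI rdn); rewrite mulr0 -[RHS]hq !huv !rmorphM !rmorphB !rmorph_nat; ring.
have e : (u 0)%:R * tri_angle x 0 + (u 1)%:R * tri_angle x 1 + (u 2%:R)%:R * tri_angle x 2%:R =
         (v 0)%:R * tri_angle x 0 + (v 1)%:R * tri_angle x 1 + (v 2%:R)%:R * tri_angle x 2%:R :> R.
  rewrite !ta; apply/eqP; rewrite -subr_eq0 -H0; apply/eqP; ring.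
have F := alg_step hi (real_rel hx e).
have n1 := rel1 R F; have n2 := rel2 R F.
have ea : (u 0%R + v 2%:R = v 0%R + u 2%:R)%N by lia.
have eb : (u 1%R + v 2%:R = v 1%R + u 2%:R)%N by lia.
have ra : ((u 0)%:R - (v 0)%:R = (u 2%:R)%:R - (v 2%:R)%:R :> R).
  have : ((u 0%R + v 2%:R)%N%:R = (v 0%R + u 2%:R)%N%:R :> R) by rewrite ea.
  rewrite !natrD => h; lra.
have rb : ((u 1)%:R - (v 1)%:R = (u 2%:R)%:R - (v 2%:R)%:R :> R).
  have : ((u 1%R + v 2%:R)%N%:R = (v 1%R + u 2%:R)%N%:R :> R) by rewrite eb.
  rewrite !natrD => h; lra.
rewrite ra rb -!mulrDr in H0.
have spos : 0 < tri_angle l 0 + tri_angle l 1 + tri_angle l 2%:R.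
  by rewrite !addr_gt0 // angle_gt0.
move/eqP: H0; rewrite mulf_eq0 (gt_eqF spos) orbF subr_eq0 eqr_nat => /eqP e2.
have e0 : u 0%R = v 0%R by lia.
have e1 : u 1%R = v 1%R by lia.
move=> j; rewrite huv; case: (ord3_cases j) => [->|[->|->]].
- by rewrite e0 subrr mulr0.
- by rewrite e1 subrr mulr0.
- by rewrite e2 subrr mulr0.
Qed.
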